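(* For $n\ge 1$ let $X(n)$ be the $\Delta$-complex with vertex set $\{-n,-(n-1),\dots,-1,1,2,\dots,n\}$ which has one $p$-simplex for every ordered sequence $(a_0,\dots,a_p)$ of $p+1$ vertices whose absolute values $|a_0|,\dots,|a_p|$ are pairwise distinct, the faces of this simplex being the simplices given by the ordered subsequences. Then $X(n)$ is $(n-1)$-spherical.
   Context: A polyhedron $Y$ is called $d$-spherical if $Y$ is nonempty and its reduced integral homology satisfies $\tilde H_i(Y)=0$ for all $i\neq d$. *)

(* Defs.v *)
From HB Require Import structures.
From mathcomp Require Import all_boot all_order all_algebra.
Set Implicit Arguments. Unset Strict Implicit. Unset Printing Implicit Defensive.
Import Order.TTheory GRing.Theory Num.Theory.
Local Open Scope ring_scope.

(* Vertices of X(n): the vertex  (b, k)  stands for  +(k+1)  if b = true and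
   -(k+1) if b = false; its absolute value is k+1, encoded by k : 'I_n. *)
Definition vert (n : nat) := (bool * 'I_n)%type.

Definition simplex (n p : nat) :=
  {t : p.+1.-tuple (vert n) | uniq (map snd (tval t))}.

Definition chain (n p : nat) := simplex n p -> int.

Definition drop_at (T : Type) (i : nat) (s : seq T) : seq T :=
  take i s ++ drop i.+1 s.

Definition bd (n p : nat) (c : chain n p.+1) : chain n p :=
  fun tau => \sum_(sigma : simplex n p.+1) \sum_(i < p.+2)
     (if tval (sval tau) == drop_at i (tval (sval sigma))
      then (-1) ^+ i * c sigma else 0).

Definition aug (n : nat) (c : chain n 0) : int := \sum_(sigma : simplex n 0) c sigma.

Definition red_homology_vanishes (n i : nat) : Prop :=
  match i with
  | 0%N => forall c : chain n 0, aug c = 0 ->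
            exists d : chain n 1, forall tau, bd d tau = c tau
  | k.+1 => forall c : chain n k.+1, (forall tau, bd c tau = 0) ->
            exists d : chain n k.+2, forall tau, bd d tau = c tau
  end.

Definition spherical (n d : nat) : Prop :=
  (exists v : simplex n 0, True) /\
  (forall i : nat, i <> d -> red_homology_vanishes n i).

(* Main.v *)
Require Import Defs.
From HB Require Import structures.
From mathcomp Require Import all_boot all_order all_algebra.
From mathcomp Require Import zify.
Set Implicit Arguments. Unset Strict Implicit. Unset Printing Implicit Defensive.
Import Order.TTheory GRing.Theory Num.Theory.
Local Open Scope ring_scope.

Section Core.
Variable n : nat.
Local Notation V := (vert n).

Fixpoint ins (i : nat) (v : V) (s : seq V) : seq V :=
  match i, s with
  | 0%N, _ => v :: s
  | i'.+1, x :: s' => x :: ins i' v s'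
  | _.+1, [::] => [:: v]
  end.

Definition keys (w : seq V) := map snd w.

Lemma size_ins i v s : size (ins i v s) = (size s).+1.
Proof. by elim: s i => [|x s IH] [|i] //=; rewrite IH. Qed.

Lemma perm_ins i v s : perm_eq (ins i v s) (v :: s).
Proof.
elim: s i => [|x s IH] [|i] //=.
have := IH i; rewrite -(perm_cons x) => /perm_trans; apply.
by rewrite (perm_catCA [:: x] [:: v] s).
Qed.

Lemma uniq_ins i v s : uniq (keys (ins i v s)) = uniq (keys (v :: s)).
Proof. apply: perm_uniq; apply: perm_map; exact: perm_ins. Qed.

Lemma mem_keys_ins a i v s : (a \in keys (ins i v s)) = (a == v.2) || (a \in keys s).
Proof. by rewrite (perm_mem (perm_map snd (perm_ins i v s))) /= in_cons. Qed.

Lemma ins_comm j i w v t : (j <= i)%N -> (i <= size t)%N ->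
  ins j w (ins i v t) = ins i.+1 v (ins j w t).
Proof.
elim: t i j => [|x t IH] [|i] [|j] //=; rewrite ?ltnS => H1 H2; try by [].
by rewrite IH.
Qed.

Definition BD (F : {set 'I_n}) (C : seq V -> int) (t : seq V) : int :=
  \sum_(0 <= i < (size t).+1) \sum_(v : V)
     (if v.2 \in F then (-1) ^+ i * C (ins i v t) else 0).

Definition vsupp (C : seq V -> int) := forall w, ~~ uniq (keys w) -> C w = 0.

Lemma vsupp_BD F C : vsupp C -> vsupp (BD F C).
Proof.
move=> HC w Hw; rewrite /BD big1 // => i _; rewrite big1 // => v _.
case: ifP => // _; rewrite HC ?mulr0 // uniq_ins /= negb_and.
by rewrite Hw orbT.
Qed.

Lemma BD_ext F C D t : (forall w, size w = (size t).+1 -> C w = D w) ->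
  BD F C t = BD F D t.
Proof.
move=> H; apply: eq_bigr => i _; apply: eq_bigr => v _.
by rewrite H // size_ins.
Qed.

Lemma BD_sub F C D t : BD F (fun w => C w - D w) t = BD F C t - BD F D t.
Proof.
rewrite /BD -sumrB; apply: eq_bigr => i _; rewrite -sumrB; apply: eq_bigr => v _.
by case: ifP; rewrite ?subr0 // mulrBr.
Qed.

Lemma BD_add F C D t : BD F (fun w => C w + D w) t = BD F C t + BD F D t.
Proof.
rewrite /BD -big_split; apply: eq_bigr => i _; rewrite -big_split; apply: eq_bigr => v _.
by case: ifP; rewrite ?addr0 // mulrDr.
Qed.

Lemma BD0 F t : BD F (fun _ => 0) t = 0.
Proof. by rewrite /BD big1 // => i _; rewrite big1 // => v _; case: ifP; rewrite ?mulr0. Qed.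


Lemma BDBD F C t : BD F (BD F C) t = 0.
Proof.
set N := size t.
pose G i j := \sum_(v : V) \sum_(w : V)
   (if v.2 \in F then if w.2 \in F then (-1) ^+ (i + j)%N * C (ins j w (ins i v t))
    else 0 else 0).
have E1 : BD F (BD F C) t = \sum_(0 <= i < N.+1) \sum_(0 <= j < N.+2) G i j.
  apply: eq_bigr => i _; rewrite /G exchange_big /=; apply: eq_bigr => v _.
  case: ifP => Hv; last by rewrite big1 // => j _; rewrite big1.
  rewrite /BD size_ins mulr_sumr; apply: eq_bigr => j _.
  rewrite mulr_sumr; apply: eq_bigr => w _.
  by case: ifP => _; rewrite ?mulr0 // (exprD (-1 : int)) -mulrA.
have HG : forall i j, (j <= i)%N -> (i <= N)%N -> G i j = - G j i.+1.
  move=> i j Hji HiN; rewrite /G -sumrN exchange_big; apply: eq_bigr => v _.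
  rewrite -sumrN; apply: eq_bigr => w _.
  rewrite ins_comm //; case: (v.2 \in F); case: (w.2 \in F); rewrite ?oppr0 //.
  by rewrite addnS exprS mulN1r mulNr opprK addnC.
rewrite E1 (eq_bigr (fun i => \sum_(0 <= j < N.+2 | (j <= i)%N) G i j +
    \sum_(0 <= j < N.+2 | ~~ (j <= i)%N) G i j)); last by move=> i _; rewrite (bigID (fun j => (j <= i)%N)).
rewrite big_split /=.
set A := (X in X + _); set B := (X in _ + X).
pose H := \sum_(0 <= i < N.+1) \sum_(0 <= j < N.+1 | (i <= j)%N) G i j.+1.
have HB : B = H.
  apply: eq_bigr => i _; rewrite big_mkcond big_nat_recl //= big_mkcond /=.
  by rewrite add0r [RHS]big_mkcond; apply: eq_bigr => j _; rewrite -leqNgt.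
have HA : A = - H.
  rewrite /A (eq_big_nat _ _ (F2 := fun i => \sum_(0 <= j < N.+2 | (j <= i)%N) - G j i.+1)); last first.
    move=> i /andP[_ Hi]; rewrite big_nat_cond [RHS]big_nat_cond.
    by apply: eq_bigr => j /andP[_ Hji]; apply: HG.
  rewrite (exchange_big_dep_nat xpredT) //= big_nat_recr //= [X in _ + X]big_nat_cond [X in _ + X]big1 ?addr0; last first.
    move=> i /andP[/andP[_ Hi] Hij].
    by move: (leq_ltn_trans Hij Hi); rewrite ltnn.
  rewrite /H -sumrN; apply: eq_bigr => i _; by rewrite -sumrN.
by rewrite HA HB addNr.
Qed.

Definition R (a : 'I_n) (C : seq V -> int) w := if a \in keys w then C w else 0.

Definition hc (a : 'I_n) (C : seq V -> int) w :=
  match w with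
  | v :: w' => if (v == (true, a)) && (a \notin keys w') then C w' else 0
  | [::] => 0
  end.

Lemma cone (F : {set 'I_n}) (a : 'I_n) (C : seq V -> int) : a \in F -> (forall w, a \in keys w -> C w = 0) ->
  (forall t, BD F C t = 0) -> forall t, BD F (hc a C) t = C t.
Proof.
move=> aF Ca BC t; rewrite /BD big_nat_recl //=.
rewrite (bigD1 (true, a)) //= aF eqxx /= big1 => [|v /negbTE Hv]; last first.
  by rewrite Hv /=; case: ifP; rewrite ?mulr0.
case: t => [|x t].
  by rewrite big_geq // expr0 mul1r /= !addr0.
rewrite /= -[in X in _ = X](addr0 (C (x :: t))).
have -> : (if a \notin keys (x :: t) then C (x :: t) else 0) = C (x :: t).
  by case: ifP => // /negbFE H; rewrite Ca.
rewrite expr0 mul1r addr0 -[RHS]addr0; congr (_ + _).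
case Hx: (x == (true, a)); last first.
  by rewrite big1 // => i _; rewrite big1 // => v _; case: ifP; rewrite ?mulr0.
rewrite -[RHS]oppr0 -[in RHS](BC t) /BD -sumrN; apply: eq_bigr => i _.
rewrite -sumrN; apply: eq_bigr => v _; case: ifP => _; rewrite ?oppr0 //=.
rewrite exprS mulN1r mulNr; case: ifP => // /negbFE /Ca ->.
by rewrite mulr0 oppr0.
Qed.


Lemma BD_eqfun F C D t : (forall w, C w = D w) -> BD F C t = BD F D t.
Proof. by move=> H; apply: BD_ext => w _; apply: H. Qed.

Lemma vsupp_R a C : vsupp C -> vsupp (R a C).
Proof. by move=> H w Hw; rewrite /R H //; case: ifP. Qed.

Lemma vsupp_hc a C : vsupp C -> vsupp (hc a C).
Proof.
move=> H [|v w] //= Hw; case: ifP => // /andP[/eqP Hv Ha].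
by apply: H; move: Hw; rewrite Hv /= Ha.
Qed.

Lemma BDa (F : {set 'I_n}) (a : 'I_n) (D : seq V -> int) t :
  a \in keys t -> vsupp D -> BD F D t = BD (F :\ a) (R a D) t.
Proof.
move=> Ha HD; apply: eq_bigr => i _; apply: eq_bigr => v _.
rewrite in_setD1; case: (eqVneq v.2 a) => [Hva|Hva] /=.
  case: ifP => // _; rewrite HD ?mulr0 // uniq_ins /= Hva Ha //.
by rewrite /R mem_keys_ins Ha orbT.
Qed.

Lemma BDa' (F : {set 'I_n}) (a : 'I_n) (D : seq V -> int) t :
  a \in keys t -> BD (F :\ a) (R a D) t = BD (F :\ a) D t.
Proof.
move=> Ha; apply: eq_bigr => i _; apply: eq_bigr => v _.
by rewrite /R mem_keys_ins Ha orbT.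
Qed.

Lemma BDna (F : {set 'I_n}) (a : 'I_n) (D : seq V -> int) t :
  a \notin keys t -> BD (F :\ a) (R a D) t = 0.
Proof.
move=> Ha; rewrite /BD big1 // => i _; rewrite big1 // => v _.
rewrite in_setD1; case: (eqVneq v.2 a) => [Hva|Hva] //=.
by rewrite /R mem_keys_ins (negbTE Ha) eq_sym (negbTE Hva) /=; case: ifP; rewrite ?mulr0.
Qed.

Lemma count_setD1 (F : {set 'I_n}) (a : 'I_n) (s : seq 'I_n) : a \in F ->
  (count (mem (F :\ a)) s + (a \in s) <= count (mem F) s)%N.
Proof.
move=> aF; elim: s => [|x s IH] //=; rewrite in_cons in_setD1.
case: (eqVneq x a) => [->|Hxa] /=; rewrite ?aF ?eqxx /=.
  by move: IH; case: (a \in s) => /=; lia.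
by rewrite -addnA leq_add2l.
Qed.

Lemma core k : forall (F : {set 'I_n}) (C : seq V -> int), #|F| = k -> vsupp C ->
  (forall t, BD F C t = 0) ->
  (forall w, C w != 0 -> (count (mem F) (keys w) < #|F|)%N) ->
  exists E, vsupp E /\ forall t, BD F E t = C t.
Proof.
elim: k => [|k IH] F C HF HC BC Hcnt.
  have C0 : forall w, C w = 0.
    by move=> w; apply/eqP; apply/negPn/negP => /Hcnt; rewrite HF.
  exists (fun _ => 0); split=> // t; by rewrite BD0 C0.
have [a aF] : exists a, a \in F by apply/card_gt0P; rewrite HF.
have HF' : #|F :\ a| = k by move: (cardsD1 a F); rewrite aF HF add1n => -[].
have [E1 [HE1 BE1]] : exists E, vsupp E /\ forall t, BD (F :\ a) E t = R a C t.
  apply: IH => //; first exact: vsupp_R.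
    move=> t; case Ha: (a \in keys t); last by rewrite BDna ?Ha.
    by rewrite -BDa.
  move=> w; rewrite /R; case: ifP => // Ha /Hcnt.
  move: (count_setD1 (keys w) aF); rewrite Ha HF HF' => H1 H2; have := leq_ltn_trans H1 H2; by rewrite addnC ltnS.
pose E1' := R a E1.
have HE1' : vsupp E1' by apply: vsupp_R.
have Claim1 : forall t, a \in keys t -> BD F E1' t = C t.
  move=> t Ha; rewrite (BDa _ Ha HE1') (@BD_eqfun _ _ (R a E1)); last first.
    by move=> w; rewrite /E1' /R; case: (a \in keys w).
  by rewrite BDa' // BE1 /R Ha.
pose C2 := fun w => C w - BD F E1' w.
have HC2 : vsupp C2.
  by move=> w Hw; rewrite /C2 HC // (vsupp_BD _ HE1') // subr0.
have C2a : forall w, a \in keys w -> C2 w = 0.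
  by move=> w Ha; rewrite /C2 Claim1 // subrr.
have BC2 : forall t, BD F C2 t = 0.
  by move=> t; rewrite BD_sub BC BDBD subr0.
exists (fun w => E1' w + hc a C2 w); split.
  by move=> w Hw; rewrite HE1' // vsupp_hc // addr0.
move=> t; rewrite BD_add cone // /C2 addrC subrK //.
Qed.


Lemma drop_at_ins i v (t : seq V) : (i <= size t)%N -> drop_at i (ins i v t) = t.
Proof.
rewrite /drop_at; elim: t i => [|x t IH] [|i] //=; rewrite ?drop0 //.
by rewrite ltnS => Hi; rewrite IH.
Qed.

Lemma nth_ins x0 i v (t : seq V) : (i <= size t)%N -> nth x0 (ins i v t) i = v.
Proof. by elim: t i => [|x t IH] [|i] //=; rewrite ltnS => Hi; rewrite IH. Qed.

Lemma ins_drop_at x0 i (s : seq V) : (i < size s)%N -> ins i (nth x0 s i) (drop_at i s) = s.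
Proof.
rewrite /drop_at; elim: s i => [|x s IH] [|i] //=; rewrite ?drop0 //.
by rewrite ltnS => Hi; rewrite IH.
Qed.

Lemma ins_eq x0 i v (s t : seq V) : (i <= size t)%N -> size s = (size t).+1 ->
  (s == ins i v t) = (t == drop_at i s) && (v == nth x0 s i).
Proof.
move=> Hi Hs; apply/eqP/andP => [->|[/eqP -> /eqP ->]].
  by rewrite drop_at_ins // nth_ins.
by rewrite ins_drop_at // Hs ltnS.
Qed.

Definition lift p (c : chain n p) : seq V -> int :=
  fun w => \sum_(s : simplex n p) if tval (sval s) == w then c s else 0.

Lemma lift_val p (c : chain n p) s : lift c (tval (sval s)) = c s.
Proof.
rewrite /lift (bigD1 s) //= eqxx big1 ?addr0 // => s' Hne.
case: ifP => // /eqP H; exfalso; move/eqP: Hne; apply.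
by apply: val_inj; apply: val_inj.
Qed.

Lemma lift_zero p (c : chain n p) w : ~~ ((size w == p.+1) && uniq (keys w)) -> lift c w = 0.
Proof.
move=> H; rewrite /lift big1 // => s _; case: ifP => // /eqP Hs; exfalso.
move: H; rewrite -Hs size_tuple eqxx /=; case: s {Hs} => t /= ->. by [].
Qed.

Lemma vsupp_lift p (c : chain n p) : vsupp (lift c).
Proof. by move=> w Hw; apply: lift_zero; rewrite negb_and Hw orbT. Qed.

Lemma exists_simplex p (w : seq V) : size w = p.+1 -> uniq (keys w) ->
  exists s : simplex n p, tval (sval s) = w.
Proof.
move=> /eqP Hs Hu.
exists (exist (fun t : p.+1.-tuple V => uniq (map snd (tval t))) (Tuple Hs) Hu).
by [].
Qed.

Lemma lift_of p (E : seq V -> int) w : vsupp E -> size w = p.+1 ->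
  lift (fun s : simplex n p => E (tval (sval s))) w = E w.
Proof.
move=> HE Hs; case Hu: (uniq (keys w)).
  by have [s <-] := exists_simplex Hs Hu; rewrite lift_val.
by rewrite lift_zero ?Hu ?andbF // HE ?Hu.
Qed.

Lemma bd_BD p (c : chain n p.+1) (tau : simplex n p) :
  bd c tau = BD setT (lift c) (tval (sval tau)).
Proof.
rewrite /bd /BD size_tuple big_mkord exchange_big /=; apply: eq_bigr => i _.
rewrite (eq_bigr (fun v => \sum_(s : simplex n p.+1)
   (if tval (sval s) == ins i v (tval (sval tau)) then (-1) ^+ i * c s else 0))); last first.
  move=> v _; rewrite in_setT /lift mulr_sumr; apply: eq_bigr => s _.
  by case: ifP; rewrite ?mulr0.
rewrite exchange_big /=; apply: eq_bigr => s _.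
rewrite (eq_bigr (fun v => if (v == nth (tnth (sval s) ord0) (tval (sval s)) i) then
    (if tval (sval tau) == drop_at i (tval (sval s)) then (-1) ^+ i * c s else 0) else 0)).
  by rewrite -big_mkcond big_pred1_eq.
move=> v _; rewrite (ins_eq (tnth (sval s) ord0)) ?size_tuple //; last first.
  by rewrite -ltnS.
by case: (_ == drop_at _ _); case: (v == _).
Qed.

Lemma aug_BD (c : chain n 0) : aug c = BD setT (lift c) [::].
Proof.
rewrite /aug /BD /= big_nat1 /lift.
rewrite (eq_bigr (fun v => \sum_(s : simplex n 0)
   (if tval (sval s) == [:: v] then c s else 0))); last first.
  by move=> v _; rewrite in_setT expr0 mul1r.
rewrite exchange_big /=; apply: eq_bigr => s _.
case: s => [[[|x [|y r]] Hs] Hu] //=.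
rewrite (eq_bigr (fun v => if v == x then c (exist (fun t : 1.-tuple V => uniq (map snd (tval t))) (Tuple Hs) Hu) else 0)).
  by rewrite -big_mkcond big_pred1_eq.
by move=> v _; rewrite eqseq_cons andbT eq_sym.
Qed.

Lemma final_step p (c : chain n p) (E : seq V -> int) : vsupp E ->
  (forall t, BD setT E t = lift c t) ->
  forall tau : simplex n p, bd (fun s : simplex n p.+1 => E (tval (sval s))) tau = c tau.
Proof.
move=> HE BE tau; rewrite bd_BD (BD_ext _ (D := E)) ?BE ?lift_val //.
by move=> w Hw; rewrite lift_of // Hw size_tuple.
Qed.

End Core.

Theorem mainTheorem6 (n : nat) (hn : (1 <= n)%N) : spherical n (n - 1).
Proof.
split.
  by exists (exist (fun t : 1.-tuple (vert n) => uniq (map snd (tval t)))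
    [tuple (true, Ordinal hn)] erefl).
have cardT : #|[set: 'I_n]| = n by rewrite cardsT card_ord.
case=> [|k] Hi.
  move=> c Hc.
  have [E [HE BE]] : exists E, vsupp E /\ forall t, BD setT E t = lift c t.
    apply: (@core n n) => //; first exact: vsupp_lift.
      case=> [|x t]; first by rewrite -aug_BD.
      rewrite (BD_ext _ (D := fun _ => 0)) ?BD0 // => w Hw.
      by rewrite lift_zero // Hw.
    move=> w Hw; rewrite cardT.
    have : (size w == 1%N) && uniq (keys w).
      by apply/negPn/negP => H; move: Hw; rewrite lift_zero ?eqxx.
    case/andP=> /eqP Hs _; apply: (leq_ltn_trans (count_size _ _)).
    rewrite size_map Hs; move: Hi hn; lia.
  by exists (fun s : simplex n 1 => E (tval (sval s))); apply: final_step.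
move=> c Hc.
have [E [HE BE]] : exists E, vsupp E /\ forall t, BD setT E t = lift c t.
  apply: (@core n n) => //; first exact: vsupp_lift.
    move=> t; case Ht: ((size t == k.+1) && uniq (keys t)).
      case/andP: Ht => /eqP Hs Hu; have [tau <-] := exists_simplex Hs Hu.
      by rewrite -bd_BD Hc.
    rewrite /BD big1 // => i _; rewrite big1 // => v _; rewrite lift_zero ?mulr0.
      by case: ifP.
    rewrite size_ins uniq_ins eqSS; move: Ht; apply: contraFN => /andP[-> /=].
    by case/andP.
  move=> w Hw; rewrite cardT.
  have : (size w == k.+2) && uniq (keys w).
    by apply/negPn/negP => H; move: Hw; rewrite lift_zero ?eqxx.
  case/andP=> /eqP Hs Hu; apply: (leq_ltn_trans (count_size _ _)).
  have Hle : (size (keys w) <= n)%N.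
    by rewrite -(card_uniqP Hu); apply: leq_trans (max_card _) _; rewrite card_ord.
  move: Hle; rewrite size_map Hs; move: Hi hn; lia.
by exists (fun s : simplex n k.+2 => E (tval (sval s))); apply: final_step.
Qed.
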